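(* In the setting below, for all $r>0$ and all $m\in\mathbb{N}$: $$\mathbb{E}\big[\mathbb{I}_{B_r}(X^x_m)|\eta(X^x_m)-\eta(x)|\big]\le m\,\mathbb{E}\big[\mathbb{I}_{B_r}(X)|\eta(X)-\eta(x)|\big],$$ $$\mathbb{E}\big[\mathbb{I}_{S_r}(X^x_m)|\eta(X^x_m)-\eta(x)|\big]\le 2\|\eta\|_\infty\, m\,\mathbb{P}_X(S_r)\exp\big(-(m-1)\mathbb{P}_X(B_r)\big),$$ $$\mathbb{E}\big[\mathbb{I}_{\mathcal{X}\setminus\bar B_r}(X^x_m)|\eta(X^x_m)-\eta(x)|\big]\le 2\|\eta\|_\infty\exp\big(-m\,\mathbb{P}_X(\bar B_r)\big).$$
   Context: Let $(\mathcal{X},d)$ be a metric space with its Borel $\sigma$-algebra, let $(\Omega,\mathcal{F},\mathbb{P})$ be a probability space, and let $X,X_1,X_2,\dots$ be i.i.d. $\mathcal{X}$-valued random variables with common law $\mathbb{P}_X$. For $x\in\mathcal{X}$ and $r>0$ write $B_r=\{x':d(x,x')<r\}$, $\bar B_r=\{x':d(x,x')\le r\}$ and $S_r=\{x':d(x,x')=r\}$. The support of $\mathbb{P}_X$ is the set of $x$ such that $\mathbb{P}_X(\bar B_r(x))>0$ for all $r>0$. Fix $x$ in the support of $\mathbb{P}_X$ and a bounded measurable $\eta:\mathcal{X}\to\mathbb{R}$, with $\|\eta\|_\infty$ its supremum norm. For each $m\in\mathbb{N}$, a nearest neighbor of $x$ among $X_1,\dots,X_m$ is a measurable $X^x_m:\Omega\to\mathcal{X}$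 with $X^x_m(\omega)\in\arg\min_{x'\in\{X_1(\omega),\dots,X_m(\omega)\}}d(x,x')$ for every $\omega\in\Omega$; fix such a sequence $(X^x_m)_{m\in\mathbb{N}}$. *)

(* Defs.v *)
From HB Require Import structures.
From mathcomp Require Import all_boot all_order all_algebra.
From mathcomp Require Import all_classical all_reals all_analysis.
Set Implicit Arguments. Unset Strict Implicit. Unset Printing Implicit Defensive.
Import Order.TTheory GRing.Theory Num.Theory.
Local Open Scope classical_set_scope.
Local Open Scope ring_scope.

Section Defs.
Context {R : realType} {T : Type}.
Variable dist : T -> T -> R.

Definition is_metric : Prop :=
  (forall x y, dist x y = 0 <-> x = y) /\
  (forall x y, dist x y = dist y x) /\
  (forall x y z, dist x z <= dist x y + dist y z).

Definition metric_open (A : set T) : Prop :=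
  forall y, A y -> exists2 e : R, 0 < e & [set z | dist y z < e] `<=` A.

Definition oball (x : T) (r : R) : set T := [set y | dist x y < r].
Definition cball (x : T) (r : R) : set T := [set y | dist x y <= r].
Definition sphere (x : T) (r : R) : set T := [set y | dist x y = r].
End Defs.

Definition supnorm {R : realType} {T : Type} (f : T -> R) : R :=
  sup (range (fun y => `|f y|)).

Definition mutually_independent {R : realType} {dO dT : measure_display}
  {O : measurableType dO} {T : measurableType dT}
  (P : probability O R) (Y : nat -> O -> T) : Prop :=
  forall (s : seq nat), uniq s ->
  forall A : nat -> set T, (forall i, measurable (A i)) ->
    P (\bigcap_(i in [set` s]) (Y i @^-1` A i)) =
    (\prod_(i <- s) P (Y i @^-1` A i))%E.

Definition identically_distributed {R : realType} {dO dT : measure_display}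
  {O : measurableType dO} {T : measurableType dT}
  (P : probability O R) (Y : nat -> O -> T) : Prop :=
  forall i (A : set T), measurable A -> P (Y i @^-1` A) = P (Y 0%N @^-1` A).

(* Main.v *)
Require Import Defs.
From HB Require Import structures.
From mathcomp Require Import all_boot all_order all_algebra.
From mathcomp Require Import all_classical all_reals all_analysis.
From mathcomp Require Import lra measurable_realfun.
Import Order.TTheory GRing.Theory Num.Theory.
Local Open Scope classical_set_scope.
Local Open Scope ring_scope.

Lemma mopen_oball (R : realType) T (dist : T -> T -> R) :
  is_metric dist -> forall x r, metric_open dist (oball dist x r).
Proof.
move=> [_ [sym tri]] x r y /= hy; exists (r - dist x y); first by rewrite subr_gt0.
move=> z /= hz; have := tri x y z; rewrite /oball/=; lra.
Qed.

Lemma mopen_ncball (R : realType) T (dist : T -> T -> R) :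
  is_metric dist -> forall x r, metric_open dist (~` cball dist x r).
Proof.
move=> [_ [sym tri]] x r y /= hy.
have hy' : r < dist x y by rewrite ltNge; apply/negP.
exists (dist x y - r); first by rewrite subr_gt0.
move=> z /= hz; have := tri x z y; rewrite (sym z y) /cball/= => h.
apply/negP; rewrite -ltNge; lra.
Qed.

Section meas.
Context (R : realType) (dT : measure_display) (T : measurableType dT) (dist : T -> T -> R).
Lemma meas_oball : is_metric dist -> (@measurable _ T = <<s metric_open dist >>) ->
  forall x r, measurable (oball dist x r).
Proof. by move=> hd hm x r; rewrite hm; apply: sub_sigma_algebra; exact: mopen_oball. Qed.
Lemma meas_ncball : is_metric dist -> (@measurable _ T = <<s metric_open dist >>) ->
  forall x r, measurable (~` cball dist x r).
Proof. by move=> hd hm x r; rewrite hm; apply: sub_sigma_algebra; exact: mopen_ncball. Qed.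
Lemma meas_cball : is_metric dist -> (@measurable _ T = <<s metric_open dist >>) ->
  forall x r, measurable (cball dist x r).
Proof. by move=> hd hm x r; rewrite -(setCK (cball _ _ _)); apply: measurableC; exact: meas_ncball. Qed.
Lemma meas_sphere : is_metric dist -> (@measurable _ T = <<s metric_open dist >>) ->
  forall x r, measurable (sphere dist x r).
Proof.
move=> hd hm x r.
have -> : sphere dist x r = cball dist x r `&` ~` oball dist x r.
  apply/seteqP; split => y /=; rewrite /sphere/cball/oball/=.
    by move=> ->; split => //; rewrite ltxx.
  by move=> [h1 h2]; apply/eqP; rewrite eq_le h1 leNgt; apply/negP.
by apply: measurableI; [exact: meas_cball| apply: measurableC; exact: meas_oball].
Qed.

Lemma meas_g (eta : T -> R) x (A : set T) : measurable A -> measurable_fun setT eta ->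
  measurable_fun setT (fun y => \1_A y * `|eta y - eta x|).
Proof.
move=> mA me; apply: measurable_funM; first exact: measurable_indic.
apply: (measurableT_comp (@normr_measurable _ _)).
by apply: measurable_funB => //; exact: measurable_cst.
Qed.
End meas.

Lemma transfer (R : realType) (dT dO : measure_display) (T : measurableType dT)
  (O : measurableType dO) (P : probability O R) (Y : nat -> O -> T)
  (mY : forall i, measurable_fun setT (Y i)) (hid : identically_distributed P Y)
  (g : T -> R) (mg : measurable_fun setT g) (g0 : forall y, 0 <= g y) i :
  (\int[P]_w (g (Y i w))%:E = \int[P]_w (g (Y 0%N w))%:E)%E.
Proof.
have h j : (\int[P]_w (g (Y j w))%:E = \int[pushforward P (Y j)]_y (g y)%:E)%E.
  rewrite (ge0_integral_pushforward (mY j)) ?preimage_setT //.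
    exact/measurable_EFinP.
  by move=> y _; rewrite lee_fin.
rewrite !h; apply: eq_measure_integral => A mA _ /=; exact: hid.
Qed.

Lemma supnorm_ub (R : realType) T (eta : T -> R) :
  (exists M : R, forall y, `|eta y| <= M) -> forall y, `|eta y| <= supnorm eta.
Proof.
move=> [M hM] y; apply: ub_le_sup; last by exists y.
by exists M => _ [z _ <-]; exact: hM.
Qed.

Lemma pow_exp_bound (R : realType) (p : R) n : 0 <= p <= 1 ->
  (1 - p) ^+ n <= expR (- (n%:R * p)).
Proof.
move=> /andP[p0 p1]; rewrite -mulrN expRM_natl; apply: lerXn2r.
- by rewrite nnegrE subr_ge0.
- by rewrite nnegrE expR_ge0.
- by have := expR_ge1Dx (- p); lra.
Qed.

Lemma prod_ind (R : realType) (dT dO : measure_display) (T : measurableType dT)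
  (O : measurableType dO) (P : probability O R) (Y : nat -> O -> T)
  (mY : forall i, measurable_fun setT (Y i))
  (hind : mutually_independent P Y) (hid : identically_distributed P Y)
  (A : nat -> set T) (mA : forall i, measurable (A i)) (s : seq nat) : uniq s ->
  P (\bigcap_(i in [set` s]) (Y i @^-1` A i)) =
  (\prod_(i <- s) fine (P (Y 0%N @^-1` A i)))%:E.
Proof.
move=> us; rewrite hind // -prodEFin; apply: eq_bigr => i _.
have mp : measurable (Y 0%N @^-1` A i).
  by rewrite -[X in measurable X]setTI; exact: mY.
by rewrite hid // fineK // fin_num_measure.
Qed.
Theorem part3 (R : realType) (dT dO : measure_display)
  (T : measurableType dT) (dist : T -> T -> R)
  (O : measurableType dO) (P : probability O R)
  (Y : nat -> O -> T) (x : T) (eta : T -> R) (NN : nat -> O -> T) :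
  is_metric dist ->
  (@measurable _ T = <<s metric_open dist >>) ->
  (forall i, measurable_fun setT (Y i)) ->
  mutually_independent P Y ->
  identically_distributed P Y ->
  measurable_fun setT eta ->
  (exists M : R, forall y, `|eta y| <= M) ->
  forall (r : R) (m : nat), 0 < r -> (1 <= m)%N ->
  measurable_fun setT (NN m) ->
  (forall w : O,
       (exists2 i : nat, (1 <= i <= m)%N & NN m w = Y i w) /\
       (forall i : nat, (1 <= i <= m)%N -> dist x (NN m w) <= dist x (Y i w))) ->
     (\int[P]_w ((\1_(~` cball dist x r) (NN m w) * `|eta (NN m w) - eta x|)%:E)
        <= (2 * supnorm eta
            * expR (- (m%:R * fine (P (Y 0%N @^-1` cball dist x r)))))%:E)%E.
Proof.
move=> hd hm mY hind hid me hb r m r0 m1 mNN hNN.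
set M := supnorm eta.
have hM a : `|eta a - eta x| <= 2 * M.
  have := ler_normB (eta a) (eta x); have := @supnorm_ub _ _ eta hb a; have := @supnorm_ub _ _ eta hb x.
  rewrite -/M; lra.
have M0 : 0 <= M by have := @supnorm_ub _ _ eta hb x; rewrite -/M; apply: le_trans.
set C := ~` cball dist x r.
have mC : measurable C by exact: meas_ncball.
set E := \bigcap_(i in [set` iota 1 m]) (Y i @^-1` C).
have mpre i (A : set T) : measurable A -> measurable (Y i @^-1` A).
  by move=> mA; rewrite -[X in measurable X]setTI; exact: mY.
have mE : measurable E.
  by apply: fin_bigcap_measurable => [|i _]; [exact: finite_seq|exact: mpre].
apply: (@le_trans _ _ (\int[P]_w ((2 * M)%:E * (\1_E w)%:E))%E).
  apply: ge0_le_integral => //.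
  - apply/measurable_EFinP; exact: (measurableT_comp (@meas_g _ _ _ eta x C mC me) mNN).
  - by apply: measurable_funeM; apply/measurable_EFinP; exact: measurable_indic.
  move=> w _; rewrite -EFinM lee_fin.
  have [hC|hC] := pselect (C (NN m w)).
    have Ew : E w.
      move=> i /=; rewrite mem_iota => /andP[i1 im]; rewrite /C/cball/= => hle.
      apply: hC; rewrite /cball/=; apply: le_trans hle.
      by apply: (proj2 (hNN w)); rewrite i1 /=; rewrite add1n ltnS in im.
    by rewrite !indicE !mem_set // mul1r mulr1.
  by rewrite indicE memNset // mul0r mulr_ge0 // ?mulr_ge0 // indicE; case: (_ \in _).
rewrite ge0_integralZl //; last 2 first.
- by apply/measurable_EFinP; exact: measurable_indic.
- by rewrite lee_fin mulr_ge0.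
have hPE : P E = (\prod_(i <- iota 1 m) fine (P (Y 0%N @^-1` C)))%:E :=
  (@prod_ind _ _ _ _ _ P Y mY hind hid (fun=> C) (fun=> mC) _ (iota_uniq 1 m)).
rewrite integral_indic // setIT -[X in (_ * X <= _)%E]/(P E) hPE.
Show.
set p := fine (P (Y 0%N @^-1` cball dist x r)).
have mB : measurable (cball dist x r) by exact: meas_cball.
have hp : P (Y 0%N @^-1` cball dist x r) = p%:E.
  by rewrite fineK //; apply: fin_num_measure; exact: mpre.
have p01 : 0 <= p <= 1.
  have := probability_le1 P (mpre 0%N _ mB); rewrite hp lee_fin => ->.
  by rewrite andbT; apply: fine_ge0.
have hc : fine (P (Y 0%N @^-1` C)) = 1 - p.
  by rewrite /C preimage_setC probability_setC ?hp //; exact: mpre _ _ mB.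
rewrite hc big_const_seq count_predT size_iota iter_mulr_1 -EFinM lee_fin.
by apply: ler_wpM2l; [rewrite mulr_ge0 | exact: pow_exp_bound].
Qed.
Theorem part1 (R : realType) (dT dO : measure_display)
  (T : measurableType dT) (dist : T -> T -> R)
  (O : measurableType dO) (P : probability O R)
  (Y : nat -> O -> T) (x : T) (eta : T -> R) (NN : nat -> O -> T) :
  is_metric dist ->
  (@measurable _ T = <<s metric_open dist >>) ->
  (forall i, measurable_fun setT (Y i)) ->
  identically_distributed P Y ->
  measurable_fun setT eta ->
  forall (r : R) (m : nat),
  measurable_fun setT (NN m) ->
  (forall w : O,
       (exists2 i : nat, (1 <= i <= m)%N & NN m w = Y i w)) ->
  (\int[P]_w ((\1_(oball dist x r) (NN m w) * `|eta (NN m w) - eta x|)%:E)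
        <= m%:R%:E * \int[P]_w ((\1_(oball dist x r) (Y 0%N w)
                                 * `|eta (Y 0%N w) - eta x|)%:E))%E.
Proof.
move=> hd hm mY hid me r m mNN hNN.
set B := oball dist x r.
have mB : measurable B by exact: meas_oball.
set g := fun y => \1_B y * `|eta y - eta x|.
have mg : measurable_fun setT g := @meas_g _ _ _ eta x B mB me.
have g0 y : 0 <= g y by rewrite /g mulr_ge0 // indicE; case: (_ \in _).
have mgY i : measurable_fun setT (fun w => (g (Y i w))%:E).
  by apply/measurable_EFinP; exact: measurableT_comp mg (mY i).
apply: (@le_trans _ _ (\int[P]_w (\sum_(i <- iota 1 m) (g (Y i w))%:E))%E).
  apply: ge0_le_integral => //.
  - by apply/measurable_EFinP; exact: (measurableT_comp mg mNN).
  - exact: emeasurable_sum.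
  move=> w _; have [i hi ->] := hNN w.
  rewrite sumEFin lee_fin (bigD1_seq i) ?iota_uniq //=; last first.
    by rewrite mem_iota add1n ltnS.
  by rewrite lerDl sumr_ge0.
rewrite ge0_integral_sum //; last by move=> i w _; rewrite lee_fin.
rewrite (eq_bigr (fun _ => (\int[P]_w (g (Y 0%N w))%:E)%E)); last first.
  by move=> i _; exact: transfer.
by rewrite big_const_seq count_predT size_iota iter_addr_0 mule_natl.
Qed.
Theorem part2 (R : realType) (dT dO : measure_display)
  (T : measurableType dT) (dist : T -> T -> R)
  (O : measurableType dO) (P : probability O R)
  (Y : nat -> O -> T) (x : T) (eta : T -> R) (NN : nat -> O -> T) :
  is_metric dist ->
  (@measurable _ T = <<s metric_open dist >>) ->
  (forall i, measurable_fun setT (Y i)) ->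
  mutually_independent P Y ->
  identically_distributed P Y ->
  measurable_fun setT eta ->
  (exists M : R, forall y, `|eta y| <= M) ->
  forall (r : R) (m : nat), 0 < r -> (1 <= m)%N ->
  measurable_fun setT (NN m) ->
  (forall w : O,
       (exists2 i : nat, (1 <= i <= m)%N & NN m w = Y i w) /\
       (forall i : nat, (1 <= i <= m)%N -> dist x (NN m w) <= dist x (Y i w))) ->
      (\int[P]_w ((\1_(sphere dist x r) (NN m w) * `|eta (NN m w) - eta x|)%:E)
        <= (2 * supnorm eta * m%:R * fine (P (Y 0%N @^-1` sphere dist x r))
            * expR (- ((m%:R - 1) * fine (P (Y 0%N @^-1` oball dist x r)))))%:E)%E.
Proof.
move=> hd hm mY hind hid me hb r m r0 m1 mNN hNN.
set M := supnorm eta.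
have hM a : `|eta a - eta x| <= 2 * M.
  have := ler_normB (eta a) (eta x); have := @supnorm_ub _ _ eta hb a.
  have := @supnorm_ub _ _ eta hb x; rewrite -/M; lra.
have M0 : 0 <= M by have := @supnorm_ub _ _ eta hb x; rewrite -/M; apply: le_trans.
set S := sphere dist x r.
set B := oball dist x r.
have mS : measurable S by exact: meas_sphere.
have mB : measurable B by exact: meas_oball.
set A := fun i j : nat => if j == i then S else ~` B.
have mA i j : measurable (A i j).
  by rewrite /A; case: (_ == _) => //; exact: measurableC.
set E := fun i => \bigcap_(j in [set` iota 1 m]) (Y j @^-1` A i j).
have mpre i (C : set T) : measurable C -> measurable (Y i @^-1` C).
  by move=> mC; rewrite -[X in measurable X]setTI; exact: mY.
have mE i : measurable (E i).
  by apply: fin_bigcap_measurable => [|j _]; [exact: finite_seq|exact: mpre].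
have ind0 (C : set O) w : 0 <= \1_C w by rewrite indicE; case: (_ \in _).
apply: (@le_trans _ _ (\int[P]_w ((2 * M)%:E *
    \sum_(i <- iota 1 m) (\1_(E i) w)%:E))%E).
  apply: ge0_le_integral => //.
  - apply/measurable_EFinP.
    exact: (measurableT_comp (@meas_g _ _ _ eta x S mS me) mNN).
  - apply: measurable_funeM; apply: emeasurable_sum => i.
    by apply/measurable_EFinP; exact: measurable_indic.
  move=> w _; rewrite sumEFin -EFinM lee_fin.
  have [hS|hS] := pselect (S (NN m w)); last first.
    by rewrite indicE memNset // mul0r mulr_ge0 ?mulr_ge0 // sumr_ge0.
  have [[i hi heq] hle] := hNN w.
  have Ew : E i w.
    move=> j /=; rewrite mem_iota add1n ltnS => hj; rewrite /A.
    case: eqP => [->|ne] /=; first by rewrite -heq.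
    rewrite /B /oball /= => hlt.
    have := hle j hj; move: hS; rewrite /S /sphere /= => ->.
    by rewrite leNgt hlt.
  rewrite (bigD1_seq i) ?iota_uniq //=; last by rewrite mem_iota add1n ltnS.
  rewrite [\1_(E i) w]indicE [\1_S _]indicE !mem_set // mul1r.
  apply: le_trans (hM _) _; rewrite mulrDr mulr1 lerDl mulr_ge0 ?mulr_ge0 //.
  exact: sumr_ge0.
rewrite ge0_integralZl //; last 3 first.
- apply: emeasurable_sum => i.
  by apply/measurable_EFinP; exact: measurable_indic.
- by move=> w _; apply: sume_ge0 => i _; rewrite lee_fin.
- by rewrite lee_fin mulr_ge0.
rewrite ge0_integral_sum //.
set q := fine (P (Y 0%N @^-1` S)).
set b := fine (P (Y 0%N @^-1` B)).
have hb' : P (Y 0%N @^-1` B) = b%:E.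
  by rewrite fineK //; apply: fin_num_measure; exact: mpre.
have b01 : 0 <= b <= 1.
  have := probability_le1 P (mpre 0%N _ mB); rewrite hb' lee_fin => ->.
  by rewrite andbT; apply: fine_ge0.
have q0 : 0 <= q by apply: fine_ge0.
have hc : fine (P (Y 0%N @^-1` ~` B)) = 1 - b.
  by rewrite preimage_setC probability_setC ?hb' //; exact: mpre _ _ mB.
rewrite (eq_big_seq (fun _ => (q * (1 - b) ^+ m.-1)%:E)); last first.
  move=> i hi; rewrite integral_indic // setIT.
  have hPE : P (E i) = (\prod_(j <- iota 1 m) fine (P (Y 0%N @^-1` A i j)))%:E :=
    (@prod_ind _ _ _ _ _ P Y mY hind hid (A i) (mA i) _ (iota_uniq 1 m)).
  apply: (etrans hPE); congr EFin.
  rewrite (bigD1_seq i) ?iota_uniq //= {1}/A eqxx -/q; congr (_ * _).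
  rewrite (eq_bigr (fun _ => 1 - b)); last first.
    by move=> j /negbTE ji; rewrite /A ji.
  rewrite big_const_seq iter_mulr_1; congr (_ ^+ _).
  have := count_predC (pred1 i) (iota 1 m).
  rewrite (count_uniq_mem _ (iota_uniq 1 m)) hi size_iota => h.
  by rewrite -[X in _ = X.-1]h.
rewrite sumEFin big_const_seq count_predT size_iota iter_addr_0 -mulr_natl -!EFinM lee_fin.
have := pow_exp_bound _ _ m.-1 b01; rewrite -subn1 natrB // => h.
rewrite -[_ *+ m]mulr_natl !mulrA; apply: ler_wpM2l => //.
  by rewrite !mulr_ge0.
by move=> i; apply/measurable_EFinP; exact: measurable_indic.
Qed.
(* Y 0 is X, Y i (i >= 1) is X_i; NN m is the nearest neighbor X^x_m. *)
Theorem mainTheorem3 (R : realType) (dT dO : measure_display)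
  (T : measurableType dT) (dist : T -> T -> R)
  (O : measurableType dO) (P : probability O R)
  (Y : nat -> O -> T) (x : T) (eta : T -> R) (NN : nat -> O -> T) :
  is_metric dist ->
  (@measurable _ T = <<s metric_open dist >>) ->
  (forall i, measurable_fun setT (Y i)) ->
  mutually_independent P Y ->
  identically_distributed P Y ->
  (forall r : R, 0 < r -> (0 < P (Y 0%N @^-1` cball dist x r))%E) ->
  measurable_fun setT eta ->
  (exists M : R, forall y, `|eta y| <= M) ->
  (forall m : nat, (1 <= m)%N ->
     measurable_fun setT (NN m) /\
     forall w : O,
       (exists2 i : nat, (1 <= i <= m)%N & NN m w = Y i w) /\
       (forall i : nat, (1 <= i <= m)%N -> dist x (NN m w) <= dist x (Y i w))) ->
  forall (r : R) (m : nat), 0 < r -> (1 <= m)%N ->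
  [/\ (\int[P]_w ((\1_(oball dist x r) (NN m w) * `|eta (NN m w) - eta x|)%:E)
        <= m%:R%:E * \int[P]_w ((\1_(oball dist x r) (Y 0%N w)
                                 * `|eta (Y 0%N w) - eta x|)%:E))%E,
      (\int[P]_w ((\1_(sphere dist x r) (NN m w) * `|eta (NN m w) - eta x|)%:E)
        <= (2 * supnorm eta * m%:R * fine (P (Y 0%N @^-1` sphere dist x r))
            * expR (- ((m%:R - 1) * fine (P (Y 0%N @^-1` oball dist x r)))))%:E)%E
    & (\int[P]_w ((\1_(~` cball dist x r) (NN m w) * `|eta (NN m w) - eta x|)%:E)
        <= (2 * supnorm eta
            * expR (- (m%:R * fine (P (Y 0%N @^-1` cball dist x r)))))%:E)%E].
Proof.
move=> hd hm mY hind hid _ me hb hNN r m r0 m1.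
have [mNN hNNm] := hNN m m1.
split.
- by apply: part1 => // w; case: (hNNm w).
- exact: part2.
- exact: part3.
Qed.
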